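(* For every positive integer $r$ and every graph $G$, if $\widetilde G$ is the graph obtained from $G$ by subdividing every edge $r$ times, then $\mathrm{cop}(\widetilde G)\le \mathrm{cop}(G)+1$.
   Context: All graphs are finite, undirected, without loops or multiple edges. Subdividing an edge $uv$ $r$ times means replacing it by a path from $u$ to $v$ with $r$ new internal vertices. Cops and Robber game on a connected graph: for an integer $k\ge 1$, the cop player places $k$ cops on (not necessarily distinct) vertices, then the robber is placed on a vertex; then, starting with the cops, the players alternate moves. In a cop move, each cop either stays or moves to an adjacent vertex; in a robber move, the robber stays or moves to an adjacent vertex. The cops win if at some point a cop and the robber occupy the same vertex. Both players have complete information. The cop number $\mathrm{cop}(G)$ of a connected graph $G$ is the smallest $k$ such that the cops have a winning strategy with $k$ cops; for a non-connected graph it is the maximum cop number of its connected components. *)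

(* Defs.v *)
(* Finite simple graphs are symmetric irreflexive relations
   on a finType. *)
From mathcomp Require Import all_boot.
From Stdlib Require Import ClassicalEpsilon.

Set Implicit Arguments.
Unset Strict Implicit.
Unset Printing Implicit Defensive.

Definition cop_move (V : finType) (adj : rel V) (k : nat)
  (c c' : 'I_k -> V) : Prop :=
  forall i, c' i = c i \/ adj (c i) (c' i).

Definition captured (V : finType) (k : nat) (c : 'I_k -> V) (x : V) : Prop :=
  exists i, c i = x.

(* cops_win_from adj c x : it is the cops' turn, cops at c, robber at x,
   and the cops have a strategy guaranteeing capture (inductive winning
   region / attractor of the game). *)
Inductive cops_win_from (V : finType) (adj : rel V) (k : nat)
  : ('I_k -> V) -> V -> Prop :=
| cw_caught c x : captured c x -> cops_win_from adj c x
| cw_move c x c' : cop_move adj c c' ->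
    (captured c' x \/
     forall x', (x' = x \/ adj x x') -> cops_win_from adj c' x') ->
    cops_win_from adj c x.

Definition cops_win_on_comp (V : finType) (adj : rel V) (k : nat) (x0 : V)
  : Prop :=
  exists c0 : 'I_k -> V, (forall i, connect adj x0 (c0 i)) /\
    forall x, connect adj x0 x -> cops_win_from adj c0 x.

Definition bool_of (P : Prop) : bool :=
  if excluded_middle_informative P then true else false.

Definition comp_cop_number (V : finType) (adj : rel V) (x0 : V) : nat :=
  let P := fun k => bool_of (0 < k /\ cops_win_on_comp adj k x0) in
  match excluded_middle_informative (exists k, P k) with
  | left h => ex_minn h
  | right _ => 0
  end.

Definition cop_number (V : finType) (adj : rel V) : nat :=
  \max_(x : V) comp_cop_number adj x.

(* each edge {u,v} represented once, oriented by enum_rank u < enum_rank v *)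
Definition sedge (T : finType) (e : rel T) :=
  {p : T * T | e p.1 p.2 && (enum_rank p.1 < enum_rank p.2)}.

(* vertices: original ones, plus r internal vertices (p, i), i < r, per edge;
   on edge p = (u,v), the path is u - (p,0) - (p,1) - ... - (p,r-1) - v *)
Definition svert (T : finType) (e : rel T) (r : nat) : finType :=
  (T + (sedge e * 'I_r))%type.

Definition sadj (T : finType) (e : rel T) (r : nat) : rel (svert e r) :=
  fun a b =>
    match a, b with
    | inl _, inl _ => false
    | inl x, inr (p, i) =>
        ((x == (val p).1) && (val i == 0)) || ((x == (val p).2) && (val i == r.-1))
    | inr (p, i), inl x =>
        ((x == (val p).1) && (val i == 0)) || ((x == (val p).2) && (val i == r.-1))
    | inr (p, i), inr (q, j) =>
        (p == q) && (((val i).+1 == val j) || ((val j).+1 == val i))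
    end.

Arguments sadj {T} e r.
Arguments svert {T} e r.
Arguments sedge {T} e.

(* Main.v *)
Require Import Defs.
From mathcomp Require Import all_boot.
From mathcomp Require Import zify.
From Stdlib Require Import FunctionalExtensionality ClassicalEpsilon.

Set Implicit Arguments.
Unset Strict Implicit.
Unset Printing Implicit Defensive.

Inductive FW (V : finType) (adj : rel V) (k : nat) : ('I_k -> V) -> V -> V -> Prop :=
| fw_caught q z p : captured q z -> FW adj q z p
| fw_capt q z p q' : cop_move adj q q' -> captured q' z -> FW adj q z p
| fw_move q z p q' : cop_move adj q q' ->
    (forall z', adj z z' -> z' <> p -> FW adj q' z' z) -> FW adj q z p.

Definition join (V : Type) k (q : 'I_k -> V) (f : V) : 'I_k.+1 -> V :=
  fun i => match unlift ord_max i with Some j => q j | None => f end.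

Definition cwf_ind2 (V : finType) (adj : rel V) (k : nat)
  (P : ('I_k -> V) -> V -> Prop)
  (Hc : forall c x, captured c x -> P c x)
  (Hm : forall c x c', cop_move adj c c' ->
     (captured c' x \/ forall x', x' = x \/ adj x x' -> P c' x') -> P c x) :
  forall c x, cops_win_from adj c x -> P c x :=
  fix F c x h {struct h} :=
  match h with
  | cw_caught c x hc => Hc c x hc
  | cw_move c x c' hm hor => Hm c x c' hm
     (match hor with
      | or_introl h1 => or_introl h1
      | or_intror h2 => or_intror (fun x' hx' => F c' x' (h2 x' hx'))
      end)
  end.

Section Follower.
Variables (V : finType) (adj : rel V) (k : nat) (C : pred V).
Hypothesis Ccl : forall u v, C u -> adj u v -> C v.

Lemma join_max (q : 'I_k -> V) f : join q f ord_max = f.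
Proof. by rewrite /join unlift_none. Qed.
Lemma join_lift (q : 'I_k -> V) f j : join q f (lift ord_max j) = q j.
Proof. by rewrite /join liftK. Qed.

Lemma join_move (q q' : 'I_k -> V) f f' : cop_move adj q q' -> (f' = f \/ adj f f') ->
  cop_move adj (join q f) (join q' f').
Proof. move=> hq hf i; rewrite /join; case: unliftP => [j _|_]; [exact: hq|exact: hf]. Qed.

Lemma path_C f s : C f -> path adj f s -> C (last f s).
Proof. elim: s f => [//|y s IH] f hf /= /andP[h1 h2]; exact: IH (Ccl hf h1) h2. Qed.

Lemma move_C (q q' : 'I_k -> V) : cop_move adj q q' -> (forall i, C (q i)) -> forall i, C (q' i).
Proof. by move=> hm hq i; case: (hm i) => [->|h]; [|apply: Ccl h]. Qed.

Hypothesis H : forall q : 'I_k -> V, (forall i, C (q i)) ->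
  forall z p, C z -> adj p z -> FW adj q z p.

Lemma follower_main L : forall (q : 'I_k -> V) f s, size s = L -> (forall i, C (q i)) -> C f ->
  path adj f s -> cops_win_from adj (join q f) (last f s).
Proof.
elim/ltn_ind: L => L IH q f s hs hq hf hp.
case/lastP: s hs hp => [|s1 z] hs hp.
  by apply: cw_caught; exists ord_max; rewrite join_max.
rewrite last_rcons.
have hz : C z by have := path_C hf hp; rewrite last_rcons.
have hpz : adj (last f s1) z by move: hp; rewrite rcons_path => /andP[].
have HF := H hq hz hpz.
have main : forall (q : 'I_k -> V) (z p : V), FW adj q z p -> forall f s1, (size s1).+1 = L ->
   p = last f s1 -> path adj f (rcons s1 z) -> (forall i, C (q i)) -> C f ->
   cops_win_from adj (join q f) z.
  clear q f s1 z hs hp hq hf hz hpz HF.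
  move=> q z p; elim=> {q z p}.
  - move=> q z p [i hi] f s1 _ _ _ _ _.
    by apply: cw_caught; exists (lift ord_max i); rewrite join_lift.
  - move=> q z p q' hm [i hi] f s1 _ _ hp _ _.
    apply: (@cw_move _ _ _ _ _ (join q' (head z s1))).
      apply: join_move => //; right; case: s1 hp => [|y s2] /= /andP[] //.
    by left; exists (lift ord_max i); rewrite join_lift.
  - move=> q z p q' hm _ IHn f s1 hs hpe hp hq hf.
    case: s1 hs hpe hp => [|y s2] hs hpe hp.
      apply: (@cw_move _ _ _ _ _ (join q' z)).
        by apply: join_move => //; right; move: hp => /= /andP[].
      by left; exists ord_max; rewrite join_max.
    move: hp => /= /andP[hfy hp].
    apply: (@cw_move _ _ _ _ _ (join q' y)); first by apply: join_move => //; right.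
    have hq' := move_C hm hq.
    have hy : C y := Ccl hf hfy.
    right=> x' hx'.
    case: (eqVneq x' z) => [->|hne].
      have hlt : size (rcons s2 z) < L by rewrite size_rcons -hs /=; lia.
      by have := IH _ hlt q' y (rcons s2 z) erefl hq' hy hp; rewrite last_rcons.
    have hzx : adj z x' by case: hx' => // h; rewrite h eqxx in hne.
    case: (eqVneq x' p) => [hxp|hxp].
      have hlt : size s2 < L by rewrite -hs /=; lia.
      have hp2 : path adj y s2 by move: hp; rewrite rcons_path => /andP[].
      by have := IH _ hlt q' y s2 erefl hq' hy hp2; rewrite hxp hpe.
    apply: (IHn x' hzx (elimN eqP hxp) y (rcons s2 z)) => //.
    - by rewrite size_rcons -hs.
    - by rewrite last_rcons.
    - by rewrite rcons_path hp last_rcons.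
apply: (main _ _ _ HF f s1) => //.
by rewrite -hs size_rcons.
Qed.

Lemma follower (q : 'I_k -> V) f s : (forall i, C (q i)) -> C f -> path adj f s ->
  cops_win_from adj (join q f) (last f s).
Proof. exact: follower_main. Qed.

End Follower.

Section Travel.
Variables (V : finType) (adj : rel V) (k : nat) (C : pred V).
Hypothesis Ccl : forall u v, C u -> adj u v -> C v.
Variable q0 : 'I_k -> V.
Hypothesis H0 : forall z p, C z -> adj p z -> FW adj q0 z p.

Lemma travel n : forall (q : 'I_k -> V) (s : 'I_k -> seq V),
  (forall i, [/\ path adj (q i) (s i), last (q i) (s i) = q0 i & size (s i) <= n]) ->
  forall z p, C z -> adj p z -> FW adj q z p.
Proof.
elim: n => [|n IH] q s hs z p hz hpz.
  have -> : q = q0.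
    apply: functional_extensionality => i.
    by case: (hs i); case: (s i).
  exact: H0.
apply: (@fw_move _ _ _ _ _ _ (fun i => head (q i) (s i))).
  move=> i; case: (hs i); case: (s i) => [|y t] /=; [by left|].
  by move=> /andP[h _] _ _; right.
move=> z' hz' _.
apply: (IH _ (fun i => behead (s i))) => //; last exact: Ccl hz'.
move=> i; case: (hs i); case: (s i) => [|y t] /= => [_ <- _|/andP[h1 h2] h3 h4].
  by split.
by split.
Qed.

End Travel.
Section Subdiv.
Variables (T : finType) (e : rel T) (r' : nat).
Hypothesis hsym : symmetric e.
Hypothesis hirr : irreflexive e.
Local Notation V := (svert e r'.+1).
Local Notation A := (sadj e r'.+1).

Definition ep (p : sedge e) (d : nat) : V :=
  if d == 0 then inl (val p).1 else if r'.+2 <= d then inl (val p).2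
  else inr (p, inord d.-1).

Lemma A_sym : symmetric A.
Proof. by case=> [x|[p i]] [y|[q j]] //=; rewrite eq_sym orbC. Qed.

Lemma ep0 p : ep p 0 = inl (val p).1.
Proof. by []. Qed.
Lemma epE p : ep p r'.+2 = inl (val p).2.
Proof. by rewrite /ep leqnn. Qed.

Lemma ep_inr (p : sedge e) (i : 'I_r'.+1) : inr (p, i) = ep p i.+1.
Proof.
rewrite /ep /= ifF; last by have := ltn_ord i; lia.
by congr inr; congr pair; apply: val_inj; rewrite /= inordK.
Qed.

Lemma ep_step p d : d < r'.+2 -> A (ep p d) (ep p d.+1).
Proof.
move=> hd; rewrite /ep /=.
case: d hd => [|d] hd /=.
  by rewrite eqxx inordK.
case: ifP => h1; first lia.
case: ifP => h2.
  have -> : d = r' by lia.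
  by rewrite /= inordK // !eqxx orbT.
by rewrite /= eqxx /= !inordK ?eqxx //; lia.
Qed.

Lemma ep_nb p d w : d < r'.+1 -> A (ep p d.+1) w -> w = ep p d \/ w = ep p d.+2.
Proof.
move=> hd; rewrite {1}/ep /= ifF; last lia.
case: w => [x|[q j]] /=.
  rewrite inordK; last lia.
  case/orP=> /andP[/eqP -> /eqP hj].
    by left; rewrite hj.
  by right; rewrite hj /ep /= leqnn.
rewrite inordK; last lia.
case/andP=> /eqP <- /orP[] /eqP hj0.
  have hj : d.+1 = (j : nat) := hj0.
  right; rewrite /ep /=; case: ifP => [h|_]; first by have := ltn_ord j; lia.
  by congr inr; congr pair; apply: val_inj; have hjr := ltn_ord j; rewrite /= inordK; lia.
have hj : (j : nat).+1 = d := hj0.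
left; rewrite /ep /=; case: d hd hj hj0 => [|d] hd hj _ //=.
case: ifP => [h|_]; first lia.
by congr inr; congr pair; apply: val_inj; have hjr := ltn_ord j; rewrite /= inordK; lia.
Qed.

Lemma inl_nb x (p : sedge e) i : A (inl x) (inr (p, i)) ->
  (x = (val p).1 /\ inr (p, i) = ep p 1) \/ (x = (val p).2 /\ inr (p, i) = ep p r'.+1).
Proof.
move=> /= /orP[] /andP[/eqP -> /eqP hi]; [left|right]; split => //; by rewrite ep_inr hi.
Qed.


Definition walk (u v : T) (t : nat) : V :=
  match (insub (u, v) : option (sedge e)) with
  | Some p => ep p t
  | None => match (insub (v, u) : option (sedge e)) with
            | Some p => ep p (r'.+2 - t)
            | None => inl u end end.

Lemma sedgeP (p : sedge e) : e (val p).1 (val p).2 && (enum_rank (val p).1 < enum_rank (val p).2).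
Proof. exact: valP p. Qed.

Lemma walk_fw (p : sedge e) t : walk (val p).1 (val p).2 t = ep p t.
Proof.
rewrite /walk; have -> : ((val p).1, (val p).2) = val p by case: (val p).
by rewrite valK.
Qed.

Lemma walk_bw (p : sedge e) t : walk (val p).2 (val p).1 t = ep p (r'.+2 - t).
Proof.
rewrite /walk insubF; last first.
  by have /andP[_ h] := sedgeP p; apply/negbTE; rewrite negb_and /= -leqNgt ltnW ?orbT.
have -> : ((val p).1, (val p).2) = val p by case: (val p).
by rewrite valK.
Qed.

Lemma walk_ne u v t : ~~ e u v -> walk u v t = inl u.
Proof.
move=> h; rewrite /walk insubF; last by apply/negbTE; rewrite negb_and h.
by rewrite insubF //; apply/negbTE; rewrite negb_and hsym h.
Qed.

Lemma edge_or u v : e u v -> exists p : sedge e,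
  ((val p).1 = u /\ (val p).2 = v) \/ ((val p).1 = v /\ (val p).2 = u).
Proof.
move=> huv; case: (ltngtP (enum_rank u : nat) (enum_rank v)) => h.
- have hp : e (u, v).1 (u, v).2 && (enum_rank (u, v).1 < enum_rank (u, v).2) by rewrite /= huv h.
  by exists (exist _ (u, v) hp); left.
- have hp : e (v, u).1 (v, u).2 && (enum_rank (v, u).1 < enum_rank (v, u).2) by rewrite /= hsym huv h.
  by exists (exist _ (v, u) hp); right.
- have /enum_rank_inj huv' : enum_rank u = enum_rank v by apply: val_inj.
  by move: huv; rewrite huv' hirr.
Qed.

Lemma walk0 u v : walk u v 0 = inl u.
Proof.
case: (boolP (e u v)) => h; last by rewrite walk_ne.
case: (edge_or h) => p [[<- <-]|[<- <-]]; first by rewrite walk_fw.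
by rewrite walk_bw subn0 epE.
Qed.

Lemma walkE u v : e u v -> walk u v r'.+2 = inl v.
Proof.
move=> h; case: (edge_or h) => p [[<- <-]|[<- <-]]; first by rewrite walk_fw epE.
by rewrite walk_bw subnn.
Qed.

Lemma walk_step u v t : e u v -> t < r'.+2 -> A (walk u v t) (walk u v t.+1).
Proof.
move=> h ht; case: (edge_or h) => p [[<- <-]|[<- <-]]; first by rewrite !walk_fw ep_step.
rewrite !walk_bw A_sym.
have -> : r'.+2 - t = (r'.+1 - t).+1 by lia.
have -> : r'.+2 - t.+1 = (r'.+1 - t) by lia.
apply: ep_step; lia.
Qed.

Lemma walk_move u v t : (u = v \/ e u v) -> t < r'.+2 ->
  walk u v t.+1 = walk u v t \/ A (walk u v t) (walk u v t.+1).
Proof.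
case=> [<-|h] ht; last by right; apply: walk_step.
by left; rewrite !walk_ne // hirr.
Qed.

Lemma walk_nb u v s w : e u v -> s < r'.+1 -> A (walk u v s.+1) w ->
  w = walk u v s \/ w = walk u v s.+2.
Proof.
move=> h hs; case: (edge_or h) => p [[<- <-]|[<- <-]]; first by rewrite !walk_fw; apply: ep_nb.
rewrite !walk_bw.
have -> : r'.+2 - s.+1 = (r' - s).+1 by lia.
have -> : r'.+2 - s = (r' - s).+2 by lia.
have -> : r'.+2 - s.+2 = (r' - s) by lia.
move=> /ep_nb []; first lia; by [right|left].
Qed.

Lemma walk_nbl u w : A (inl u) w -> exists v, e u v /\ w = walk u v 1.
Proof.
case: w => [//|[p i]] /inl_nb [[-> ->]|[-> ->]].
  by exists (val p).2; rewrite walk_fw; have /andP[-> _] := sedgeP p.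
exists (val p).1; rewrite walk_bw hsym subSS subn0.
by have /andP[-> _] := sedgeP p.
Qed.

Lemma lift_edge u v : e u v -> connect A (inl u) (inl v).
Proof.
move=> h; rewrite -(walkE h).
have : forall t, t <= r'.+2 -> connect A (inl u) (walk u v t).
  elim=> [|t IH] ht; first by rewrite walk0.
  apply: connect_trans (IH (ltnW ht)) (connect1 _); exact: walk_step.
by apply.
Qed.

Lemma lift_conn u v : connect e u v -> connect A (inl u) (inl v).
Proof.
move=> /connectP[s hp ->]; elim: s u hp => [|y s IH] u /=; first by rewrite connect0.
by move=> /andP[h1 h2]; apply: connect_trans (lift_edge h1) (IH _ h2).
Qed.

Definition base (z : V) : T := match z with inl x => x | inr (p, _) => (val p).1 end.

Lemma base_conn z : connect A z (inl (base z)).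
Proof.
case: z => [x|[p i]] /=; first exact: connect0.
rewrite ep_inr.
have : forall d, d <= r'.+2 -> connect A (ep p d) (ep p 0).
  elim=> [|d IH] hd; first exact: connect0.
  apply: connect_trans (connect1 _) (IH (ltnW hd)); rewrite A_sym; exact: ep_step.
apply; have := ltn_ord i; lia.
Qed.

Lemma proj_edge u w : A u w -> connect e (base u) (base w).
Proof.
case: u => [x|[p i]]; case: w => [y|[q j]] //=.
- case/orP=> /andP[/eqP -> _]; first exact: connect0.
  apply: connect1; rewrite hsym; by have /andP[] := sedgeP q.
- case/orP=> /andP[/eqP -> _]; first exact: connect0.
  apply: connect1; by have /andP[] := sedgeP p.
- by case/andP=> /eqP -> _; exact: connect0.
Qed.

Lemma proj_conn u w : connect A u w -> connect e (base u) (base w).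
Proof.
move=> /connectP[s hp ->]; elim: s u hp => [|y s IH] u /=; first by rewrite connect0.
by move=> /andP[h1 h2]; apply: connect_trans (proj_edge h1) (IH _ h2).
Qed.


Lemma simC (k : nat) : forall (c : 'I_k -> T) x', cops_win_from e c x' ->
  forall x, e x x' -> FW A (fun i => inl (c i)) (walk x x' 1) (walk x x' 0).
Proof.
apply: (@cwf_ind2 _ e k (fun c x' => forall x, e x x' ->
   FW A (fun i => inl (c i)) (walk x x' 1) (walk x x' 0))).
- move=> c x' [i hi] x hx.
  have H : forall m j, j + m = r'.+2 -> 0 < j ->
      FW A (fun i => inl (c i)) (walk x x' j) (walk x x' j.-1).
    elim=> [|m IH] j hjm hj.
      by apply: fw_caught; exists i; rewrite addn0 in hjm; rewrite hjm walkE // hi.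
    apply: (@fw_move _ _ _ _ _ _ (fun i => inl (c i))); first by move=> ?; left.
    move=> z' hz' hne.
    case: j hjm hj hz' hne => [//|s] hjm _ hz' hne.
    have hs : s < r'.+1 by lia.
    case: (walk_nb hx hs hz') => hz; first by rewrite hz in hne.
    rewrite hz; apply: (IH s.+2); lia.
  exact: H r'.+1 1 erefl erefl.
- move=> c x' c' hm Hor x hx.
  have H : forall m j, j + m = r'.+2 -> 0 < j ->
      FW A (fun i => walk (c i) (c' i) j.-1) (walk x x' j) (walk x x' j.-1).
    elim=> [|m IH] j hjm hj.
      rewrite addn0 in hjm; subst j.
      rewrite walkE //=.
      have hmv : cop_move A (fun i => walk (c i) (c' i) r'.+1) (fun i => inl (c' i)).
        move=> i; case: (hm i) => [->|h].
          by left; rewrite walk_ne // hirr.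
        by right; rewrite -(walkE h); apply: walk_step.
      case: Hor => [[i hi]|Hn].
        by apply: (fw_capt _ hmv); exists i; rewrite hi.
      apply: (@fw_move _ _ _ _ _ _ (fun i => inl (c' i)) hmv) => z' hz' _.
      case: (walk_nbl hz') => x'' [hx'' ->].
      by have := Hn x'' (or_intror hx'') x' hx''; rewrite walk0.
    case: j hjm hj => [//|s] hjm _.
    apply: (@fw_move _ _ _ _ _ _ (fun i => walk (c i) (c' i) s.+1)).
      move=> i /=; apply: walk_move; last by lia.
      by case: (hm i) => [->|h]; [left|right].
    move=> z' hz' hne.
    have hs : s < r'.+1 by lia.
    case: (walk_nb hx hs hz') => hz; first by rewrite hz in hne.
    rewrite hz; apply: (IH s.+2); lia.
  have := H r'.+1 1 erefl erefl.
  have -> // : (fun i => walk (c i) (c' i) 0) = (fun i => inl (c i)).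
  by apply: functional_extensionality => i; rewrite walk0.
Qed.

Lemma phaseB k (c0 : 'I_k -> T) x0 (Hw : forall x, connect e x0 x -> cops_win_from e c0 x) :
  forall z p, connect e x0 (base z) -> A p z -> FW A (fun i => inl (c0 i)) z p.
Proof.
set q := fun i => inl (c0 i).
have VB : forall x p, connect e x0 x -> FW A q (inl x) p.
  move=> x p hx; apply: (@fw_move _ _ _ _ _ _ q); first by move=> ?; left.
  move=> z' hz' _; case: (walk_nbl hz') => x' [hxx' ->].
  have := simC (Hw x' (connect_trans hx (connect1 hxx'))) hxx'.
  by rewrite walk0.
move=> z p; case: z => [x|[p0 i]] /=; first by move=> hx _; exact: VB.
move=> hx hpz.
have hx2 : connect e x0 (val p0).2.
  by apply: connect_trans hx (connect1 _); have /andP[] := sedgeP p0.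
have fwd : forall m d, d + m = r'.+2 -> 0 < d -> FW A q (ep p0 d) (ep p0 d.-1).
  elim=> [|m IH] d hdm hd.
    by rewrite addn0 in hdm; rewrite hdm epE; apply: VB.
  apply: (@fw_move _ _ _ _ _ _ q); first by move=> ?; left.
  move=> z' hz' hne.
  case: d hdm hd hz' hne => [//|s] hdm _ hz' hne.
  have hs : s < r'.+1 by lia.
  case: (ep_nb hs hz') => hz; first by rewrite hz in hne.
  rewrite hz; apply: IH; lia.
have bwd : forall d, 0 < d < r'.+2 -> FW A q (ep p0 d) (ep p0 d.+1).
  elim=> [//|s IH] hd.
  apply: (@fw_move _ _ _ _ _ _ q); first by move=> ?; left.
  move=> z' hz' hne.
  have hs : s < r'.+1 by lia.
  case: (ep_nb hs hz') => hz; last by rewrite hz in hne.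
  rewrite hz; clear hz' hne hz; case: s IH hd hs => [|s'] IH hd hs.
    by rewrite ep0; apply: VB.
  apply: IH; lia.
rewrite ep_inr; rewrite ep_inr A_sym in hpz.
have hi : i < r'.+1 := ltn_ord i.
case: (ep_nb hi hpz) => ->.
  apply: (fwd (r'.+1 - i)); lia.
apply: bwd; lia.
Qed.

End Subdiv.

Lemma bool_ofP (P : Prop) : bool_of P <-> P.
Proof. by rewrite /bool_of; case: excluded_middle_informative. Qed.

Lemma ccn_spec (V : finType) (adj : rel V) x0 :
  0 < comp_cop_number adj x0 /\ cops_win_on_comp adj (comp_cop_number adj x0) x0.
Proof.
rewrite /comp_cop_number; case: excluded_middle_informative => [h|hn].
  by case: ex_minnP => m /bool_ofP.
exfalso; apply: hn; exists #|V|; apply/bool_ofP; split.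
  by apply/card_gt0P; exists x0.
exists (fun i => if connect adj x0 (enum_val i) then enum_val i else x0); split.
  by move=> i; case: ifP => // _; exact: connect0.
by move=> x hx; apply: cw_caught; exists (enum_rank x); rewrite enum_rankK hx.
Qed.

Lemma ccn_le (V : finType) (adj : rel V) x0 k : 0 < k -> cops_win_on_comp adj k x0 ->
  comp_cop_number adj x0 <= k.
Proof.
move=> hk hw; rewrite /comp_cop_number; case: excluded_middle_informative => [h|//].
by case: ex_minnP => m _ hmin; apply: hmin; apply/bool_ofP.
Qed.

Theorem proposition13 (T : finType) (e : rel T) (r : nat) :
  symmetric e -> irreflexive e -> 0 < r ->
  cop_number (sadj e r) <= (cop_number e).+1.
Proof.
move=> hsym hirr; case: r => [//|r'] _.
rewrite /cop_number; apply/bigmax_leqP => a _.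
have hle : comp_cop_number e (base a) <= \max_x comp_cop_number e x := leq_bigmax _.
have [hk hw] := ccn_spec e (base a).
move: (comp_cop_number e (base a)) hk hw hle => k hk [c0 [hc0 Hw]] hle.
apply: (@leq_trans k.+1); last by rewrite ltnS.
apply: ccn_le => //.
pose C := connect (sadj e r'.+1) a.
have Asym : symmetric (sadj e r'.+1) := A_sym (e:=e) (r':=r').
have Csym := sym_connect_sym Asym.
have Ccl : forall u v, C u -> sadj e r'.+1 u v -> C v.
  by move=> u v hu huv; apply: connect_trans hu (connect1 huv).
have Ca0 : C (inl (base a)) := base_conn a.
have Cc0 : forall i, C (inl (c0 i)) := fun i => connect_trans Ca0 (lift_conn r' hsym hirr (hc0 i)).
have HBC : forall z p, C z -> sadj e r'.+1 p z -> FW (sadj e r'.+1) (fun i => inl (c0 i)) z p.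
  move=> z p hz hpz; apply: (phaseB hsym hirr Hw) => //.
  exact: (proj_conn hsym hz).
have HA : forall q : 'I_k -> svert e r'.+1, (forall i, C (q i)) ->
    forall z p, C z -> sadj e r'.+1 p z -> FW (sadj e r'.+1) q z p.
  move=> q hq.
  have : forall i, exists s, path (sadj e r'.+1) (q i) s /\ last (q i) s = inl (c0 i).
    move=> i; have : connect (sadj e r'.+1) (q i) (inl (c0 i)).
      by apply: connect_trans (Cc0 i); rewrite Csym; exact: hq.
    by case/connectP => s hp hl; exists s.
  case/fin_all_exists => s hs.
  apply: (travel Ccl HBC (n := \max_i size (s i)) (s := s)) => i.
  by case: (hs i) => h1 h2; split => //; exact: leq_bigmax.
exists (join (fun i => inl (c0 i)) a); split.
  by move=> i; rewrite /join; case: unliftP => [j _|_]; [exact: Cc0|exact: connect0].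
move=> x; case/connectP => s hp ->.
exact: (follower Ccl HA (q := fun i => inl (c0 i)) Cc0 (connect0 _ _) hp).
Qed.
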